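(* For positive integers $k<n$, $$\theta_k(\ell_\infty,\ell_\infty)\le \binom{n}{k}(k+1)^{\frac{k-1}{2}},$$ i.e. every $B\in\mathbb{C}^{n\times n}$ whose columns all have $\ell_\infty$ norm $1$ satisfies $\|C_k(B)\|_\infty\le\binom nk (k+1)^{(k-1)/2}$.
   Context: $C_k(B)$ is the $k$th compound of $B$: the $\binom nk\times\binom nk$ matrix of all $k\times k$ minors $\det B(\alpha|\beta)$, indexed by $k$-subsets $\alpha,\beta$ of $\{1,\ldots,n\}$. For vectors $\|\cdot\|_\infty$ is the max-modulus norm; for matrices it is the induced operator norm (maximum absolute row sum). $\theta_k(\mu,\nu)=\max\{\mu(C_k(B)): B\in\mathbb{C}^{n\times n},\ \nu(\mathrm{col}_i(B))=1\ \forall i\}$, where $\mathrm{col}_i(B)$ is the $i$th column. *)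

(* Defs.v *)
From HB Require Import structures.
From mathcomp Require Import all_boot all_order all_algebra.
From mathcomp Require Import complex.
From mathcomp Require Import reals.
Set Implicit Arguments. Unset Strict Implicit. Unset Printing Implicit Defensive.
Import Order.TTheory GRing.Theory Num.Theory.
Local Open Scope ring_scope.

(* The i-th (0-based) element of A in increasing order, if it exists:
   the unique x in A with exactly i elements of A below it. *)
Definition kth_elt n (A : {set 'I_n}) (i : nat) : option 'I_n :=
  [pick x in A | #|[set y in A | (y < x)%N]| == i].

(* The k x k submatrix B(alpha|beta), rows alpha and columns beta in increasing order
   (meaningful when #|alpha| = #|beta| = k). *)
Definition submx_sets (T : Type) (z : T) n k (B : 'M[T]_n) (a b : {set 'I_n}) : 'M[T]_k :=
  \matrix_(i < k, j < k)
     match kth_elt a i, kth_elt b j with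
     | Some r, Some c => B r c
     | _, _ => z
     end.

Definition minor (R : comNzRingType) n k (B : 'M[R]_n) (a b : {set 'I_n}) : R :=
  \det (submx_sets 0 k B a b).

(* ||C_k(B)||_infty: maximum absolute row sum of the k-th compound matrix,
   rows/columns indexed by k-subsets of {0,..,n-1}. *)
Definition compound_inf_norm (R : rcfType) n k (B : 'M[R[i]]_n) : R :=
  \big[Num.max/0]_(a : {set 'I_n} | #|a| == k)
     \sum_(b : {set 'I_n} | #|b| == k) ComplexField.Normc.normc (minor k B a b).

Definition col_inf_norm (R : rcfType) n (B : 'M[R[i]]_n) (j : 'I_n) : R :=
  \big[Num.max/0]_(i < n) ComplexField.Normc.normc (B i j).

(* Main.v *)
Require Import Defs.
From HB Require Import structures.
From mathcomp Require Import all_boot all_order all_algebra.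
From mathcomp Require Import complex.
From mathcomp Require Import reals.
Set Implicit Arguments. Unset Strict Implicit. Unset Printing Implicit Defensive.
Import Order.TTheory GRing.Theory Num.Theory.
Local Open Scope ring_scope.

Section Hadamard.
Variable C : numClosedFieldType.

Definition ct m n (A : 'M[C]_(m,n)) : 'M[C]_(n,m) := (map_mx Num.conj A)^T.

Lemma ct_mul m n p (A : 'M[C]_(m,n)) (B : 'M[C]_(n,p)) : ct (A *m B) = ct B *m ct A.
Proof. by rewrite /ct map_mxM trmx_mul. Qed.

Lemma ctD m n (A B : 'M[C]_(m,n)) : ct (A + B) = ct A + ct B.
Proof. by apply/matrixP => i j; rewrite !mxE rmorphD. Qed.

Lemma ctK m n (A : 'M[C]_(m,n)) : ct (ct A) = A.
Proof. by apply/matrixP => i j; rewrite !mxE conjCK. Qed.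

Lemma ct0 m n : ct (0 : 'M[C]_(m,n)) = 0.
Proof. by apply/matrixP => i j; rewrite !mxE conjC0. Qed.

Lemma ct_col_mx m1 m2 n (A : 'M[C]_(m1,n)) (B : 'M[C]_(m2,n)) :
  ct (col_mx A B) = row_mx (ct A) (ct B).
Proof. by rewrite /ct map_col_mx tr_col_mx. Qed.

Definition dd m (v : 'rV[C]_m) := (v *m ct v) 0 0.

Lemma dd_sum m (v : 'rV[C]_m) : dd v = \sum_j `|v 0 j| ^+ 2.
Proof. by rewrite /dd !mxE; apply: eq_bigr => j _; rewrite !mxE normCK. Qed.

Lemma dd_ge0 m (v : 'rV[C]_m) : 0 <= dd v.
Proof. by rewrite dd_sum; apply: sumr_ge0 => j _; rewrite exprn_ge0. Qed.

Lemma dd_eq0 m (v : 'rV[C]_m) : dd v = 0 -> v = 0.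
Proof.
rewrite dd_sum => /psumr_eq0P h; apply/rowP => j; rewrite mxE.
have /eqP := h (fun _ _ => exprn_ge0 _ (normr_ge0 _)) j isT.
by rewrite sqrf_eq0 normr_eq0 => /eqP.
Qed.

Lemma diag_dd p m (A : 'M[C]_(p,m)) i : (A *m ct A) i i = dd (row i A).
Proof. by rewrite /dd !mxE; apply: eq_bigr => j _; rewrite !mxE. Qed.

Lemma row0_col_mx p m (r : 'rV[C]_m) (A : 'M[C]_(p,m)) :
  row (ord0 : 'I_(1 + p)) (col_mx r A) = r.
Proof.
apply/rowP => j; rewrite [LHS]mxE.
have -> : (ord0 : 'I_(1+p)) = lshift p (ord0 : 'I_1) by apply/val_inj.
by rewrite col_mxEu.
Qed.

Lemma rowS_col_mx p m (r : 'rV[C]_m) (A : 'M[C]_(p,m)) i :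
  row (lift (ord0 : 'I_(1 + p)) i) (col_mx r A) = row i A.
Proof.
apply/rowP => j; rewrite [LHS]mxE [RHS]mxE.
have -> : (lift (ord0 : 'I_(1+p)) i) = rshift 1 i by apply/val_inj.
by rewrite col_mxEd.
Qed.

Lemma hadamard p m (A : 'M[C]_(p,m)) :
  0 <= \det (A *m ct A) <= \prod_i dd (row i A).
Proof.
elim: p A => [|p IH] A; first by rewrite det_mx00 big_ord0 lexx ler01.
have -> : A = col_mx (usubmx (A : 'M_(1 + p, m))) (dsubmx (A : 'M_(1 + p, m))).
  by rewrite vsubmxK.
move: (usubmx _) (dsubmx _) => r R'.
set G' := R' *m ct R'.
have prod_ge0 : 0 <= \prod_(i < 1 + p) dd (row i (col_mx r R')).
  by apply: prodr_ge0 => i _; apply: dd_ge0.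
case/boolP: (\det G' == 0) => hG'.
  case/det0P: hG' => v v0 hv.
  have w0 : v *m R' = 0.
    apply: dd_eq0; rewrite /dd ct_mul mulmxA -[v *m R' *m ct R']mulmxA.
    by rewrite -/G' hv mul0mx mxE.
  have /eqP -> : \det (col_mx r R' *m ct (col_mx r R')) == 0.
    apply/det0P; exists (row_mx 0 v).
      by rewrite row_mx_eq0 negb_and v0 orbT.
    by rewrite mulmxA mul_row_col mul0mx add0r w0 mul0mx.
  by rewrite lexx prod_ge0.
have uG : G' \in unitmx by rewrite unitmxE unitfE.
set c := r *m ct R' *m invmx G'.
set r' := r - c *m R'.
have orth : r' *m ct R' = 0.
  by rewrite /r' mulmxBl -mulmxA -/G' /c mulmxKV // subrr.
have orth' : R' *m ct r' = 0 by rewrite -[R']ctK -ct_mul orth ct0.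
have hr : r = r' + c *m R' by rewrite /r' subrK.
clearbody r'.
have hE : col_mx r R' = block_mx 1%:M c 0 1%:M *m col_mx r' R'.
  by rewrite mul_block_col !mul1mx !mul0mx add0r -hr.
have detE : \det (block_mx (1%:M : 'M[C]_1) c 0 (1%:M : 'M[C]_p)) = 1.
  by rewrite det_ublock !det1 mulr1.
have hdet : \det (col_mx r R' *m ct (col_mx r R')) = dd r' * \det G'.
  set E := block_mx _ _ _ _ in detE hE.
  have key : col_mx r R' *m ct (col_mx r R') =
    E *m (col_mx r' R' *m ct (col_mx r' R')) *m ct E.
    by rewrite hE ct_mul !mulmxA.
  rewrite key det_mulmx det_mulmx detE mul1r.
  rewrite /ct det_tr det_map_mx detE rmorph1 mulr1 -/(ct _) ct_col_mx.
  by rewrite mul_col_row orth orth' det_ublock det_mx11.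
have hdd : dd r = dd r' + dd (c *m R').
  have e1 : r' *m ct (c *m R') = 0 by rewrite ct_mul mulmxA orth mul0mx.
  have e2 : c *m R' *m ct r' = 0 by rewrite -mulmxA orth' mulmx0.
  rewrite {1}hr /dd ctD mulmxDr !mulmxDl e1 e2 addr0 add0r.
  by rewrite [LHS]mxE.
rewrite hdet big_ord_recl row0_col_mx.
under eq_bigr => i _ do rewrite rowS_col_mx.
have /andP[h1 h2] := IH R'.
rewrite mulr_ge0 ?dd_ge0 //=.
apply: ler_pM => //; first exact: dd_ge0.
by rewrite hdd lerDl dd_ge0.
Qed.

Lemma det_ct m (M : 'M[C]_m) : \det (M *m ct M) = `|\det M| ^+ 2.
Proof. by rewrite det_mulmx /ct det_tr det_map_mx normCK. Qed.

Lemma hadamard_sq m (M : 'M[C]_m) :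
  (forall i j, `|M i j| <= 1) -> `|\det M| ^+ 2 <= m%:R ^+ m.
Proof.
move=> hM; rewrite -det_ct.
have /andP[_ h] := hadamard M; apply: (le_trans h).
rewrite -[in X in _ <= _ ^+ X](card_ord m) -prodr_const.
apply: ler_prod => i _; rewrite dd_ge0 dd_sum /=.
rewrite -[X in _ <= X%:R](card_ord m) -sumr_const.
apply: ler_sum => j _; rewrite !mxE exprn_ile1 //.
Qed.


Lemma conj_div_norm (x : C) : x^* / `|x| * x = `|x|.
Proof.
have [->|x0] := eqVneq x 0; first by rewrite normr0 mulr0.
rewrite mulrAC [x^* * x]mulrC -normCK expr2 mulfK //.
by rewrite normr_eq0.
Qed.

Lemma norm_conj_div_le1 (x : C) : `|x^* / `|x| | <= 1.
Proof.
have [->|x0] := eqVneq x 0; first by rewrite conjC0 mul0r normr0 ler01.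
by rewrite normrM normfV norm_conjC normr_id divff ?normr_eq0 // normr1.
Qed.

Lemma sum_minors_bound k (A : 'M[C]_(k, k.+1)) :
  (forall i j, `|A i j| <= 1) ->
  (\sum_j `|\det (col' j A)|) ^+ 2 <= (k.+1)%:R ^+ k.+1.
Proof.
move=> hA.
pose s := fun j : 'I_k.+1 => (-1) ^+ j * \det (col' j A).
pose u := fun j => (s j)^* / `|s j|.
pose M : 'M[C]_k.+1 := \matrix_(i, j) if unlift ord0 i is Some i' then A i' j else u j.
have hrow j : row' ord0 (col' j M) = col' j A.
  by apply/matrixP => i l; rewrite !mxE liftK.
have hcof j : cofactor M ord0 j = s j by rewrite /cofactor hrow add0n.
have hM0 j : M ord0 j = u j by rewrite mxE unlift_none.
have key : \det M = \sum_j `|\det (col' j A)|.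
  rewrite (expand_det_row M ord0); apply: eq_bigr => j _.
  rewrite hM0 hcof /u conj_div_norm /s normrM normrX normrN1 expr1n mul1r //.
have hMb i j : `|M i j| <= 1.
  rewrite mxE; case: unlift => [i'|]; first exact: hA.
  exact: norm_conj_div_le1.
have := hadamard_sq hMb.
by rewrite key ger0_norm // sumr_ge0.
Qed.


Section Kth.
Variable n : nat.
Implicit Types A : {set 'I_n}.

Definition rk A (x : 'I_n) := #|[set y in A | (y < x)%N]|.

Lemma kthP A (i : nat) x : kth_elt A i = Some x -> x \in A /\ rk A x = i.
Proof. by rewrite /kth_elt; case: pickP => // y /andP[yA /eqP hy] [<-]. Qed.

Lemma rk_lt A x y : x \in A -> y \in A -> (x < y)%N -> (rk A x < rk A y)%N.
Proof.
move=> xA yA xy; apply: proper_card; apply/properP; split.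
  apply/subsetP => z; rewrite !inE => /andP[-> zx] /=; exact: ltn_trans zx xy.
by exists x; rewrite !inE ?xA ?xy ?ltnn.
Qed.

Lemma rk_inj A : {in A &, injective (rk A)}.
Proof.
move=> x y xA yA e; case: (ltngtP x y) => [xy|yx|/val_inj //].
  by have := rk_lt xA yA xy; rewrite e ltnn.
by have := rk_lt yA xA yx; rewrite e ltnn.
Qed.

Lemma rk_ltA A x : x \in A -> (rk A x < #|A|)%N.
Proof.
move=> xA; apply: proper_card; apply/properP; split.
  by apply/subsetP => z; rewrite !inE => /andP[].
by exists x; rewrite // !inE ltnn andbF.
Qed.

Lemma kth_exists A (i : nat) : (i < #|A|)%N -> exists x, kth_elt A i = Some x.
Proof.
move=> hi.
suff [x xA hx] : exists2 x, x \in A & rk A x = i.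
  rewrite /kth_elt; case: pickP => [y _|/(_ x)]; first by exists y.
  by rewrite xA /= -/(rk A x) hx eqxx.
move: hi; case hm : #|A| => [//|m] hi.
pose g := fun x => (inord (rk A x) : 'I_m.+1).
have rkm x : x \in A -> (rk A x < m.+1)%N by move=> xA; rewrite -hm rk_ltA.
have ginj : {in A &, injective g}.
  move=> x y xA yA e; have := congr1 (@nat_of_ord _) e; rewrite /g !inordK ?rkm //.
  exact: rk_inj.
have himg : g @: A = [set: 'I_m.+1].
  apply/eqP; rewrite eqEcard subsetT cardsT card_ord card_in_imset // hm.
  by rewrite /= ltnSn.
have : (inord i : 'I_m.+1) \in g @: A by rewrite himg inE.
case/imsetP => x xA hx; exists x => //.
by have := congr1 (@nat_of_ord _) hx; rewrite /g !inordK ?rkm.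
Qed.

Variable x0 : 'I_n.

Definition kf k A (j : 'I_k) : 'I_n := odflt x0 (kth_elt A j).

Section KF.
Variables (k : nat) (A : {set 'I_n}) (hA : #|A| = k).

Lemma kfE (j : 'I_k) : kth_elt A j = Some (kf A j).
Proof.
have [x hx] : exists x, kth_elt A j = Some x by apply: kth_exists; rewrite hA.
by rewrite /kf hx.
Qed.

Lemma kf_in (j : 'I_k) : kf A j \in A.
Proof. by have [] := kthP (kfE j). Qed.

Lemma kf_rk (j : 'I_k) : rk A (kf A j) = j.
Proof. by have [] := kthP (kfE j). Qed.

Lemma kf_inj : injective (@kf k A).
Proof. by move=> i j e; apply: ord_inj; rewrite -(kf_rk i) e kf_rk. Qed.

Lemma kf_img : (@kf k A) @: setT = A.
Proof.
apply/eqP; rewrite eqEcard card_imset; last exact: kf_inj.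
rewrite cardsT card_ord hA leqnn andbT.
by apply/subsetP => y /imsetP[j _ ->]; exact: kf_in.
Qed.
End KF.

Lemma submx_kf (R : Type) (z : R) k (B : 'M[R]_n) (a b : {set 'I_n}) :
  #|a| = k -> #|b| = k ->
  submx_sets z k B a b = \matrix_(i, j) B (kf a i) (kf b j).
Proof. by move=> ha hb; apply/matrixP => i j; rewrite !mxE (kfE ha) (kfE hb). Qed.

End Kth.

Lemma det_reindex_cols (R : numDomainType) n k (F : 'I_k -> 'I_n -> R)
    (g h : 'I_k -> 'I_n) :
  injective g -> injective h -> g @: setT = h @: setT ->
  `|\det (\matrix_(i, j) F i (h j))| = `|\det (\matrix_(i, j) F i (g j))|.
Proof.
move=> ginj hinj E.
have hs j : exists i, g i = h j.
  have : h j \in g @: setT by rewrite E; apply: imset_f.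
  by case/imsetP => i _ ->; exists i.
pose s j := odflt j [pick i | g i == h j].
have hsE j : g (s j) = h j.
  rewrite /s; case: pickP => [i /eqP //|].
  by case: (hs j) => i hi /(_ i); rewrite hi eqxx.
have sinj : injective s by move=> j1 j2 e; apply: hinj; rewrite -!hsE e.
pose p := perm.perm sinj.
have -> : \matrix_(i, j) F i (h j) = col_perm p (\matrix_(i, j) F i (g j)).
  by apply/matrixP => i j; rewrite !mxE perm.permE hsE.
by rewrite col_permE det_mulmx det_perm normrM normrX normrN1 expr1n mulr1.
Qed.

Lemma L3 n (x0 : 'I_n) k (B : 'M[C]_n) (a c : {set 'I_n}) :
  #|a| = k -> #|c| = k.+1 -> (forall i j, `|B i j| <= 1) ->
  (\sum_(x in c) `|minor k B a (c :\ x)|) ^+ 2 <= (k.+1)%:R ^+ k.+1.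
Proof.
move=> ha hc hB.
pose h := @kf n x0 k.+1 c.
have hinj : injective h := kf_inj (x0:=x0) hc.
have himg : h @: setT = c := kf_img x0 hc.
rewrite -{1}himg big_imset /=; last by move=> ? ? _ _; apply: hinj.
pose A := \matrix_(i < k, l < k.+1) B (kf x0 a i) (h l).
have e j : `|minor k B a (c :\ h j)| = `|\det (col' j A)|.
  have hin : h j \in c by rewrite -himg imset_f.
  have hcj : #|c :\ h j| = k.
    by have := cardsD1 (h j) c; rewrite hc hin add1n => -[].
  rewrite /minor (submx_kf x0 0 B ha hcj).
  have -> : col' j A = \matrix_(i, l) B (kf x0 a i) ((h \o lift j) l).
    by apply/matrixP => i l; rewrite !mxE.
  have hinj' : injective (h \o lift j) := inj_comp hinj (@lift_inj _ j).
  symmetry; apply: (@det_reindex_cols _ _ _ (fun i y => B (kf x0 a i) y) (kf x0 (c :\ h j)) (h \o lift j)) => //; first exact: (kf_inj (x0:=x0) hcj).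
  rewrite (kf_img x0 hcj); symmetry; apply/eqP; rewrite eqEcard card_imset // cardsT card_ord hcj.
  rewrite leqnn andbT; apply/subsetP => y /imsetP[l _ ->].
  by rewrite !inE /= (inj_eq hinj) eq_sym neq_lift /= -himg imset_f.
under eq_bigr => j _ do rewrite e.
rewrite (eq_bigl xpredT); last by move=> j; rewrite inE.
by apply: sum_minors_bound => i l; rewrite mxE.
Qed.

End Hadamard.

Local Notation normc := ComplexField.Normc.normc.
Unset Implicit Arguments.
Set Strict Implicit.

Theorem theorem2p7 (R : realType) (n k : nat) (hk0 : (0 < k)%N) (hkn : (k < n)%N)
    (B : 'M[R[i]]_n) (hB : forall j : 'I_n, col_inf_norm B j = 1) :
  compound_inf_norm k B <= ('C(n, k))%:R * Num.sqrt ((k.+1)%:R ^+ (k.-1) : R).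
Proof.
have n0 : (0 < n)%N by apply: leq_ltn_trans hkn.
pose x0 : 'I_n := Ordinal n0.
pose T : R := Num.sqrt ((k.+1)%:R ^+ k.+1).
have hB1 i j : `|B i j| <= 1.
  have : normc (B i j) <= 1.
    by rewrite -(hB j); exact: (le_bigmax 0 (fun i => normc (B i j)) i).
  by rewrite -lecR.
have L3R (a c : {set 'I_n}) : #|a| = k -> #|c| = k.+1 ->
    \sum_(x in c) normc (minor k B a (c :\ x)) <= T.
  move=> ha hc; have := L3 x0 ha hc hB1.
  set S := \sum_(x in c) _.
  have -> : \sum_(x in c) `|minor k B a (c :\ x)| = (S%:C)%C.
    by rewrite /S rmorph_sum.
  rewrite -rmorphXn -(rmorph_nat (@real_complex R)) /= -rmorphXn lecR => h.
  have S0 : 0 <= S by apply: sumr_ge0 => x _; case: (minor _ _ _ _) => ? ?; exact: sqrtr_ge0.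
  by rewrite -(ger0_norm S0) -sqrtr_sqr /T ler_wsqrtr.
have nc0 (z : R[i]) : 0 <= normc z by case: z => ? ?; exact: sqrtr_ge0.
have hT : T = (k.+1)%:R * Num.sqrt ((k.+1)%:R ^+ k.-1 : R).
  rewrite /T.
  have -> : ((k.+1)%:R ^+ k.+1 : R) = (k.+1)%:R ^+ 2 * (k.+1)%:R ^+ k.-1.
    by rewrite -exprD; congr (_ ^+ _); rewrite add2n prednK.
  by rewrite sqrtrM ?exprn_ge0 ?ler0n // sqrtr_sqr ger0_norm ?ler0n.
apply: bigmax_le; first by rewrite mulr_ge0 ?ler0n ?sqrtr_ge0.
move=> a /eqP ha.
set F := fun b => normc (minor k B a b).
have nk0 : (0 < n - k)%N by rewrite subn_gt0.
rewrite -(ler_pM2l (_ : 0 < (n - k)%:R)) ?ltr0n //.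
have eq1 : (n - k)%:R * \sum_(b : {set 'I_n} | #|b| == k) F b =
    \sum_(c : {set 'I_n} | #|c| == k.+1) \sum_(x in c) F (c :\ x).
  rewrite mulr_sumr.
  transitivity (\sum_(b : {set 'I_n} | #|b| == k) \sum_(x in ~: b) F b).
    apply: eq_bigr => b /eqP hb; rewrite sumr_const mulr_natl; congr (_ *+ _).
    have := cardsC b; rewrite hb card_ord => e.
    by rewrite -[X in (X - k)%N]e addKn.
  rewrite (exchange_big_dep xpredT) //= [RHS](exchange_big_dep xpredT) //=.
  apply: eq_bigr => x _.
  rewrite [RHS](reindex_onto (fun b => x |: b) (fun c => c :\ x)); last first.
    by move=> c /andP[_ xc]; rewrite setD1K.
  apply: eq_big => b; last first.
    by rewrite inE => /andP[_ xb]; rewrite /F setU1K.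
  case: (boolP (x \in b)) => xb.
    rewrite inE xb andbF /=; symmetry; apply/negbTE.
    apply/negP => /andP[_ /eqP e]; have := setD11 x (x |: b); by rewrite e xb.
  by rewrite inE xb andbT setU1K // eqxx setU11 cardsU1 xb add1n eqSS !andbT.
rewrite eq1.
apply: (@le_trans _ _ (\sum_(c : {set 'I_n} | #|c| == k.+1) T)).
  by apply: ler_sum => c /eqP hc; apply: L3R.
rewrite (eq_bigl (fun c => c \in [set c : {set 'I_n} | #|c| == k.+1])); last first.
  by move=> c; rewrite inE.
rewrite sumr_const card_draws card_ord.
have e2 : T *+ 'C(n, k.+1) = (n - k)%:R * ('C(n, k)%:R * Num.sqrt ((k.+1)%:R ^+ k.-1 : R)).
  rewrite -[T *+ _]mulr_natl hT mulrA -natrM mulnC.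
  have hb : ('C(n, k) * (n - k))%N = ('C(n, k.+1) * k.+1)%N.
    by rewrite mulnC -mul_bin_left mulnC.
  by rewrite hb natrM -mulrA.
by rewrite e2.
Qed.
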